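(* Let $G$ be a supergraceful graph with $p$ nodes and $q$ edges having a node $u$ of degree $p-1$, and suppose $G$ has a total labeling $\varphi$ with $\varphi(u) = p+q$. Then there exists a total labeling $\mu$ of $G$ such that $1 \in N(\mu)$.
   Context: Graphs are finite, simple. For a labeling $\varphi: V(G) \to \mathbb{Z}_{>0}$ let $N(\varphi) = \{\varphi(x) : x \in V(G)\}$ and $E(\varphi) = \{|\varphi(x)-\varphi(y)| : xy \in E(G)\}$. A total labeling of a graph $G$ with $p$ nodes and $q$ edges is a map $\varphi$ such that the $p$ node labels and the $q$ edge labels are pairwise distinct and $N(\varphi) \cup E(\varphi) = \{1,\dots,p+q\}$; $G$ is supergraceful if it admits a total labeling. *)

(* Defs.v *)
From mathcomp Require Import all_boot.
Set Implicit Arguments. Unset Strict Implicit. Unset Printing Implicit Defensive.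

Definition simple_graph (T : finType) (e : rel T) : Prop :=
  irreflexive e /\ symmetric e.

Definition edges (T : finType) (e : rel T) : {set {set T}} :=
  [set [set x; y] | x in T, y in T & e x y].

Definition absdiff (m n : nat) : nat := (m - n) + (n - m).

(* Total labeling phi of G (p = #|T| nodes, q = #|edges e| edges):
   positive node labels; node labels pairwise distinct; edge labels
   |phi x - phi y| pairwise distinct (distinct edges get distinct labels);
   no node label equals an edge label; and N(phi) ∪ E(phi) = {1,...,p+q}. *)
Definition total_labeling (T : finType) (e : rel T) (phi : T -> nat) : Prop :=
  [/\ (forall x, 0 < phi x),
      injective phi,
      (forall x y x' y', e x y -> e x' y' ->
          absdiff (phi x) (phi y) = absdiff (phi x') (phi y') ->
          [set x; y] = [set x'; y']),
      (forall z x y, e x y -> phi z <> absdiff (phi x) (phi y))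
    & (forall k, (1 <= k <= #|T| + #|edges e|) <->
          ((exists z, phi z = k) \/
           (exists x y, e x y /\ absdiff (phi x) (phi y) = k)))].

Definition supergraceful (T : finType) (e : rel T) : Prop :=
  exists phi, total_labeling e phi.

(* Main.v *)
Require Import Defs.
From mathcomp Require Import all_boot.
From mathcomp Require Import zify.

Theorem corollary8p3 (T : finType) (e : rel T) (u : T) (phi : T -> nat) :
  simple_graph e ->
  supergraceful e ->
  #|[set v | e u v]| = #|T| - 1 ->
  total_labeling e phi ->
  phi u = #|T| + #|edges e| ->
  exists mu : T -> nat, total_labeling e mu /\ (exists x, mu x = 1).
Proof.
move=> [irr sym] _ deg [pos inj einj ne cov] Mdef.
set M := #|T| + #|edges e| in Mdef cov *.
have le_M : forall x, phi x <= M.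
  move=> x; have /andP[_ ->] // := proj2 (cov (phi x)) (or_introl (ex_intro _ x erefl)).
have lt_M : forall x, x != u -> phi x < M.
  move=> x xu; rewrite ltn_neqAle le_M andbT -Mdef; apply/negP => /eqP /inj /eqP.
  by rewrite (negbTE xu).
have hub : forall v, v != u -> e u v.
  have sub : [set v | e u v] \subset [set~ u].
    apply/subsetP => v; rewrite !inE; apply: contraTneq => ->; by rewrite irr.
  have := cardsC1 u; rewrite -subn1 -deg => /esym/subset_cardP/(_ sub) H v vu.
  by have := H v; rewrite !inE vu.
have dl : forall x y, e x y -> 1 <= absdiff (phi x) (phi y) <= M.
  move=> x y exy; apply/(cov _).2; right; by exists x, y.
have dlt : forall x y, absdiff (phi x) (phi y) < M.
  move=> x y; have := pos x; have := pos y; have := le_M x; have := le_M y.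
  rewrite /absdiff; lia.
case: (boolP [exists z, phi z == 1]) => [/existsP [z /eqP h1]|h1]; first by exists phi; split => //; exists z.
have no1 : forall z, phi z <> 1.
  by move=> z hz; move/negP: h1; apply; apply/existsP; exists z; rewrite hz.
have M2 : 2 <= M.
  by have := pos u; have := no1 u; rewrite Mdef; lia.
have [v hv] : exists v, phi v = M - 1.
  have := proj1 (cov (M - 1)); case.
    - apply/andP; split; lia.
    - by [].
  move=> [x [y [exy hxy]]]; exfalso.
  have := pos x; have := pos y; have := le_M x; have := le_M y; have := no1 x; have := no1 y.
  move: hxy; rewrite /absdiff; lia.
have vu : v != u by apply/eqP => vu; move: hv; rewrite vu Mdef; lia.
pose mu x := if x == u then M else M - phi x.
have el : forall x y, e x y -> absdiff (mu x) (mu y) =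
   if x == u then phi y else if y == u then phi x else absdiff (phi x) (phi y).
  move=> x y exy; rewrite /mu; case: (x =P u) => [xu|/eqP xu]; case: (y =P u) => [yu|/eqP yu].
  - by move: exy; rewrite xu yu irr.
  - by have := lt_M y yu; rewrite /absdiff; lia.
  - by have := lt_M x xu; rewrite /absdiff; lia.
  - by have := lt_M y yu; have := lt_M x xu; rewrite /absdiff; lia.
exists mu; split; last by exists v; rewrite /mu (negbTE vu); lia.
split.
- move=> x; rewrite /mu; case: eqP => [_|/eqP xu]; first lia.
  by have := lt_M x xu; lia.
- move=> x y; rewrite /mu; case: (x =P u) => [xu|/eqP xu]; case: (y =P u) => [yu|/eqP yu].
  + by rewrite xu yu.
  + by have := lt_M y yu; have := pos y; lia.
  + by have := lt_M x xu; have := pos x; lia.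
  + have := lt_M y yu; have := lt_M x xu => h1' h2' h; apply: inj; lia.
- move=> x y x' y' exy exy'; rewrite (el _ _ exy) (el _ _ exy').
  case: (x =P u) => [xu|/eqP xu]; case: (y =P u) => [yu|/eqP yu];
  case: (x' =P u) => [xu'|/eqP xu']; case: (y' =P u) => [yu'|/eqP yu'];
  try (by move: exy; rewrite xu yu irr); try (by move: exy'; rewrite xu' yu' irr).
  + by move/inj => ->; rewrite xu xu'.
  + by move/inj => ->; rewrite xu yu' setUC.
  + by move=> h; exfalso; apply: (ne y x' y' exy' h).
  + by move/inj => ->; rewrite yu xu' setUC.
  + by move/inj => ->; rewrite yu yu'.
  + by move=> h; exfalso; apply: (ne x x' y' exy' h).
  + by move=> h; exfalso; apply: (ne y' x y exy (esym h)).
  + by move=> h; exfalso; apply: (ne x' x y exy (esym h)).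
  + by apply: einj.
- move=> z x y exy; rewrite (el _ _ exy) /mu.
  case: (z =P u) => [zu|/eqP zu]; case: (x =P u) => [xu|/eqP xu]; case: (y =P u) => [yu|/eqP yu];
  try (by move: exy; rewrite xu yu irr).
  + by move=> h; move: (lt_M y yu); lia.
  + by move=> h; move: (lt_M x xu); lia.
  + by move=> h; move: (dlt x y); lia.
  + move=> h; apply: (ne y u z (hub z zu)); rewrite /absdiff Mdef.
    by have := lt_M z zu; lia.
  + move=> h; apply: (ne x u z (hub z zu)); rewrite /absdiff Mdef.
    by have := lt_M z zu; lia.
  + move=> h.
    have hz : absdiff (phi u) (phi z) = absdiff (phi x) (phi y).
      by rewrite -h /absdiff Mdef; have := lt_M z zu; lia.
    have := einj _ _ _ _ (hub z zu) exy hz => /setP /(_ u); rewrite !inE eqxx /=.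
    by move/esym/orP => [] /eqP hh; [move: xu | move: yu]; rewrite hh eqxx.
- move=> k; split.
  + move/(cov k) => [[z hz]|[x [y [exy hxy]]]].
    * case: (z =P u) => [zu|/eqP zu].
        by left; exists u; rewrite /mu eqxx -Mdef -hz zu.
      right; exists u, z; split; first exact: hub.
      by rewrite (el _ _ (hub z zu)) eqxx.
    * case: (x =P u) => [xu|/eqP xu]; case: (y =P u) => [yu|/eqP yu].
      -- by move: exy; rewrite xu yu irr.
      -- left; exists y; rewrite /mu (negbTE yu) -hxy xu Mdef /absdiff.
         by have := lt_M y yu; lia.
      -- left; exists x; rewrite /mu (negbTE xu) -hxy yu Mdef /absdiff.
         by have := lt_M x xu; lia.
      -- right; exists x, y; split => //; rewrite (el _ _ exy).
         by rewrite (negbTE xu) (negbTE yu).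
  + move=> [[z hz]|[x [y [exy hxy]]]].
    * move: hz; rewrite /mu; case: (z =P u) => [_ <-|/eqP zu <-]; first lia.
      by have := lt_M z zu; have := pos z; lia.
    * move: hxy; rewrite (el _ _ exy).
      case: (x =P u) => [xu|/eqP xu]; last case: (y =P u) => [yu|/eqP yu].
      -- by move=> <-; have := le_M y; have := pos y; lia.
      -- by move=> <-; have := le_M x; have := pos x; lia.
      -- by move=> <-; exact: dl.
Qed.
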